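(* For all integers $n\ge 2$ and $0\le i\le n$, $$|\mathrm{Bal}^*(n,i)|=\binom{2n-2}{n-i-1}-\binom{2n-2}{n-i-2}+\binom{n-2}{n-i}.$$ Moreover, for the same $n,i$, $$\Big|\bigsqcup_{\substack{b\ge\max(i,1),\ k\ge0\\ 2b-i+k=n}}\mathrm{SYT}^{+k}\big((b,b-i)\big)\Big|=\binom{2n-2}{n-i-1}-\binom{2n-2}{n-i-2}+\binom{n-2}{n-i},$$ where $(b,0)$ denotes the one-row shape $(b)$.
   Context: Binomial coefficients $\binom{a}{c}$ with $a\ge0$ are $0$ if $c<0$ or $c>a$. A ballotlike path of length $n$ ending at height $i$ is a lattice path from $(0,0)$ to $(n,i)$ with steps $U=(1,1)$, $D=(1,-1)$ and horizontal steps $(1,0)$ colored umber ($u$) or denim ($d$), never going below the $x$-axis, such that no umber step occurs at height $0$ and no denim step occurs before the first $D$ step. $\mathrm{Bal}^*(n,i)$ is the set of these paths. $\mathrm{SYT}^{+k}(\lambda)$: for a partition $\lambda$ of $N$ and $k\ge0$, the set of fillings of the cells of $\lambda$ by nonempty sets of positive integers forming a set partition of $[N+k]$, with $\max S(u)<\min S(v)$ whenever $u\ne v$ and $u$ is weakly northwest of $v$. *)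

(* Defs.v *)
From HB Require Import structures.
From mathcomp Require Import all_boot all_order all_algebra.
Set Implicit Arguments. Unset Strict Implicit. Unset Printing Implicit Defensive.
Import Order.TTheory GRing.Theory Num.Theory.

(* U = (1,1), D = (1,-1), Hu = umber horizontal step, Hd = denim horizontal step *)
Inductive step := U | D | Hu | Hd.

Definition step_code (s : step) : 'I_4 :=
  match s with U => inord 0 | D => inord 1 | Hu => inord 2 | Hd => inord 3 end.
Definition step_decode (o : 'I_4) : step :=
  match val o with 0 => U | 1 => D | 2 => Hu | _ => Hd end.
Lemma step_codeK : cancel step_code step_decode.
Proof. by case; rewrite /step_decode /= inordK. Qed.

HB.instance Definition _ := Finite.copy step (can_type step_codeK).

(* Returns
   [Some final_height] if the path never goes below the x-axis, no umber
   step occurs at height 0, and no denim step occurs before the first D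
   step; returns [None] otherwise. *)
Fixpoint walk (h : nat) (seenD : bool) (s : seq step) : option nat :=
  match s with
  | [::] => Some h
  | U :: s' => walk h.+1 seenD s'
  | D :: s' => if h is h'.+1 then walk h' true s' else None
  | Hu :: s' => if h == 0 then None else walk h seenD s'
  | Hd :: s' => if seenD then walk h seenD s' else None
  end.

Definition Bal (n i : nat) : {set n.-tuple step} :=
  [set p : n.-tuple step | walk 0 false p == Some i].

(* A partition lambda is given as the seq of its row lengths.  Cells are
   pairs (r, c) (row r, column c, 0-based); the cell (r,c) belongs to lambda
   iff r < size lambda and c < lambda_r.  A filling is a finite function on
   the bounding box 'I_(size lambda) * 'I_(lambda_0), with value set0 outside
   the shape (to make it canonical).  The ground set [N+k] = {1,...,N+k} is
   represented (order-preservingly) by 'I_(N+k) = {0,...,N+k-1}. *)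
Definition cell (lam : seq nat) := ('I_(size lam) * 'I_(head 0 lam))%type.

Definition in_shape (lam : seq nat) (u : cell lam) : bool :=
  (val u.2 < nth 0 lam (val u.1))%N.

Definition weakly_nw (lam : seq nat) (u v : cell lam) : bool :=
  (val u.1 <= val v.1)%N && (val u.2 <= val v.2)%N.

Definition SYTplus (lam : seq nat) (k : nat)
  : {set {ffun cell lam -> {set 'I_(sumn lam + k)}}} :=
  [set f : {ffun cell lam -> {set 'I_(sumn lam + k)}} |
     [forall u, ~~ in_shape u ==> (f u == set0)] &&
     [forall u, in_shape u ==> (f u != set0)] &&
     [forall u, forall v, (in_shape u && in_shape v && (u != v)) ==>
          [disjoint f u & f v]] &&
     [forall x, [exists u, in_shape u && (x \in f u)]] &&
     [forall u, forall v, (in_shape u && in_shape v && (u != v) && weakly_nw u v)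
          ==> [forall x, forall y, ((x \in f u) && (y \in f v)) ==> (x < y)%N]]].

Definition two_row (b i : nat) : seq nat :=
  if (b - i == 0)%N then [:: b] else [:: b; b - i].

Definition binZ (a : nat) (c : int) : int :=
  if (c < 0)%R then 0%R else Posz (binomial a `|c|%N).

(* Main.v *)
Require Import Defs.
From mathcomp Require Import all_boot all_order all_algebra.
From mathcomp Require Import zify ring lra.
Import Order.TTheory GRing.Theory Num.Theory.
Set Implicit Arguments. Unset Strict Implicit. Unset Printing Implicit Defensive.

Definition cnt (T : finType) n (Q : seq T -> bool) :=
  #|[set t : n.-tuple T | Q (tval t)]|.

Lemma cnt_ext (T : finType) n (Q1 Q2 : seq T -> bool) :
  (forall w, Q1 w = Q2 w) -> cnt n Q1 = cnt n Q2.
Proof. by move=> e; rewrite /cnt; apply: eq_card => t; rewrite !inE e. Qed.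

Lemma cnt_sum (T : finType) n (Q : seq T -> bool) :
  cnt n Q = \sum_(t : n.-tuple T) (Q t : nat).
Proof.
rewrite /cnt -sum1_card big_mkcond /=; apply: eq_bigr => t _.
by rewrite inE; case: (Q t).
Qed.

Lemma cnt_rcons (T : finType) n (Q : seq T -> bool) :
  cnt n.+1 Q = \sum_(x : T) cnt n (fun w => Q (rcons w x)).
Proof.
rewrite cnt_sum.
rewrite (reindex (fun p : n.-tuple T * T => [tuple of rcons p.1 p.2])) /=.
  rewrite -(pair_bigA _ (fun t x => (Q (rcons (tval t) x) : nat))) /=.
  rewrite exchange_big; apply: eq_bigr => x _; by rewrite cnt_sum.
exists (fun t : n.+1.-tuple T => ([tuple of belast (thead t) (behead t)], last (thead t) (behead t))).
  move=> [t x] _ /=.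
  have e := tuple_eta [tuple of rcons t x].
  have e2 : rcons (belast (thead [tuple of rcons t x]) (behead [tuple of rcons t x]))
           (last (thead [tuple of rcons t x]) (behead [tuple of rcons t x])) = rcons t x.
    by rewrite -lastI; move: e => /(congr1 val) /= <-.
  move/rcons_inj: e2 => [e3 e4]; congr pair; last by [].
  by apply: val_inj.
move=> t _; apply: val_inj; rewrite /= -lastI.
exact: (esym (congr1 val (tuple_eta t))).
Qed.

Lemma cnt0 (T : finType) (Q : seq T -> bool) : cnt 0 Q = Q [::].
Proof.
rewrite cnt_sum (big_pred1 [tuple]) // => t; by rewrite [t]tuple0 !inE eqxx.
Qed.

Lemma cnt_or (T : finType) n (Q1 Q2 : seq T -> bool) :
  (forall w, ~~ (Q1 w && Q2 w)) -> cnt n (fun w => Q1 w || Q2 w) = cnt n Q1 + cnt n Q2.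
Proof.
move=> d; rewrite !cnt_sum -big_split /=; apply: eq_bigr => t _.
by move: (d t); case: (Q1 t); case: (Q2 t).
Qed.

Lemma cnt_false (T : finType) n : cnt n (fun _ : seq T => false) = 0.
Proof. by rewrite cnt_sum big1. Qed.

Definition stepf (x : step) (s : nat * bool) : option (nat * bool) :=
  let (h, b) := s in
  match x with
  | U => Some (h.+1, b)
  | D => if h is h'.+1 then Some (h', true) else None
  | Hu => if h == 0 then None else Some (h, b)
  | Hd => if b then Some (h, b) else None
  end.

Fixpoint walk2 (s0 : nat * bool) (w : seq step) : option (nat * bool) :=
  match w with
  | [::] => Some s0
  | x :: w' => obind (fun s => walk2 s w') (stepf x s0)
  end.

Lemma walkE h b w : walk h b w = omap fst (walk2 (h, b) w).
Proof.
elim: w h b => [|x w IH] h b //=.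
case: x => /=; rewrite ?IH //.
- by case: h.
- by case: (h == 0) => //=.
- by case: b.
Qed.

Lemma walk2_rcons s0 w x : walk2 s0 (rcons w x) = obind (stepf x) (walk2 s0 w).
Proof.
elim: w s0 => [|y w IH] s0 /=; first by case: (stepf x s0).
by case: (stepf y s0).
Qed.

Lemma sum_step (F : step -> nat) : \sum_(x : step) F x = F U + F D + F Hu + F Hd.
Proof.
rewrite (reindex step_decode) /=.
  by rewrite !big_ord_recl big_ord0 /= addn0 !addnA.
exists step_code => [o _|x _]; last by rewrite step_codeK.
case: o => [[|[|[|[|k]]]] Hk] //=; apply: val_inj; rewrite /= inordK //.
Qed.

Definition N n h b := cnt n (fun w => walk2 (0, false) w == Some (h, b)).

Lemma oeq (a c : nat) (b d : bool) : (Some (a, b) == Some (c, d)) = (a == c) && (b == d).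
Proof. by apply/eqP/andP => [[-> ->]|[/eqP -> /eqP ->]]. Qed.
Lemma oeqN (c : nat) (d : bool) : (None == Some (c, d)) = false.
Proof. by []. Qed.

Lemma pU o h b : (obind (stepf U) o == Some (h, b)) =
  (if h is h'.+1 then o == Some (h', b) else false).
Proof. case: o => [[h0 b0]|] /=; rewrite ?oeq ?oeqN; case: h => [|h] //=; rewrite ?oeq; try case: b; try case: b0; lia. Qed.

Lemma pD o h b : (obind (stepf D) o == Some (h, b)) =
  b && ((o == Some (h.+1, false)) || (o == Some (h.+1, true))).
Proof. case: o => [[h0 b0]|] /=; rewrite ?oeq ?oeqN; try case: h0 => [|h0] /=; rewrite ?oeq ?oeqN; try case: b; try case: b0; lia. Qed.

Lemma pHu o h b : (obind (stepf Hu) o == Some (h, b)) = (h != 0) && (o == Some (h, b)).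
Proof. case: o => [[h0 b0]|] /=; rewrite ?oeq ?oeqN; try case: h0 => [|h0] /=; rewrite ?oeq ?oeqN; try case: b; try case: b0; lia. Qed.

Lemma pHd o h b : (obind (stepf Hd) o == Some (h, b)) = b && (o == Some (h, b)).
Proof. case: o => [[h0 b0]|] /=; rewrite ?oeq ?oeqN; try case: b0 => /=; rewrite ?oeq ?oeqN; try case: b; lia. Qed.

Lemma N_rec n h b : N n.+1 h b =
  (if h is h'.+1 then N n h' b else 0) +
  (if b then N n h.+1 false + N n h.+1 true else 0) +
  (if h is 0 then 0 else N n h b) + (if b then N n h b else 0).
Proof.
rewrite /N cnt_rcons sum_step.
have eU : cnt n (fun w => walk2 (0,false) (rcons w U) == Some (h,b)) =
    if h is h'.+1 then N n h' b else 0.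
  rewrite (@cnt_ext _ _ _ (fun w => if h is h'.+1 then walk2 (0,false) w == Some (h',b) else false)).
    by case: (h) => [|?]; rewrite ?cnt_false.
  by move=> w; rewrite walk2_rcons pU.
have eD : cnt n (fun w => walk2 (0,false) (rcons w D) == Some (h,b)) =
    if b then N n h.+1 false + N n h.+1 true else 0.
  rewrite (@cnt_ext _ _ _ (fun w => b && ((walk2 (0,false) w == Some (h.+1,false)) || (walk2 (0,false) w == Some (h.+1,true))))).
    case: (b); last by rewrite cnt_false.
    rewrite cnt_or // => w; case: (walk2 _ w) => [[h0 b0]|] //=; rewrite !oeq; by case: b0; rewrite ?andbF.
  by move=> w; rewrite walk2_rcons pD.
have eHu : cnt n (fun w => walk2 (0,false) (rcons w Hu) == Some (h,b)) =
    if h is 0 then 0 else N n h b.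
  rewrite (@cnt_ext _ _ _ (fun w => (h != 0) && (walk2 (0,false) w == Some (h,b)))).
    by case: (h) => [|?]; rewrite ?cnt_false.
  by move=> w; rewrite walk2_rcons pHu.
have eHd : cnt n (fun w => walk2 (0,false) (rcons w Hd) == Some (h,b)) =
    if b then N n h b else 0.
  rewrite (@cnt_ext _ _ _ (fun w => b && (walk2 (0,false) w == Some (h,b)))).
    by case: (b); rewrite ?cnt_false.
  by move=> w; rewrite walk2_rcons pHd.
by rewrite eU eD eHu eHd.
Qed.

Lemma N0 h b : N 0 h b = ((h == 0) && ~~ b).
Proof. rewrite /N cnt0 /= oeq eq_sym [false == b]eq_sym; by case: b; rewrite ?andbF ?andbT. Qed.

Module BinZL.
Local Open Scope ring_scope.

Lemma binZ_out a (c : int) : (c < 0) \/ (a%:Z < c) -> binZ a c = 0.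
Proof.
rewrite /binZ; case: ltrP => //= c0 [|h]; first by lia.
rewrite bin_small //; lia.
Qed.

Lemma binZ_Posz a k : binZ a k%:Z = 'C(a, k)%:Z.
Proof. by []. Qed.

Lemma binZ_S a (c : int) : binZ a.+1 c = binZ a c + binZ a (c - 1).
Proof.
case: c => [[|k]|k].
- rewrite binZ_Posz bin0 (@binZ_out a (0 - 1)) ?binZ_Posz ?bin0 ?addr0 //; left; lia.
- have -> : (k.+1)%:Z - 1 = k%:Z by lia.
  by rewrite !binZ_Posz binS PoszD.
- rewrite !binZ_out //; left; lia.
Qed.

Lemma binZ_S2 a (c : int) : binZ a.+2 c = binZ a c + 2 * binZ a (c - 1) + binZ a (c - 2).
Proof.
rewrite !binZ_S (_ : c - 1 - 1 = c - 2); last lia.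
ring.
Qed.

Lemma binZ_sym a (c : int) : binZ a c = binZ a (a%:Z - c).
Proof.
case: (ltrP c 0) => c0; first by rewrite !binZ_out //; [right; lia | left].
case: (ltrP a%:Z c) => ca; first by rewrite !binZ_out //; [left; lia | right].
have [k ck] : exists k : nat, c = k%:Z by exists `|c|%N; lia.
subst c.
have -> : a%:Z - k%:Z = (a - k)%N%:Z by lia.
by rewrite !binZ_Posz bin_sub //; lia.
Qed.

Ltac norm_binZ :=
  repeat match goal with
  | |- context[binZ ?a ?c1] =>
    match goal with
    | |- context[binZ ?b ?c2] =>
      assert_fails (constr_eq (binZ a c1) (binZ b c2));
      let e := fresh "e" in
      assert (e : binZ b c2 = binZ a c1) by (congr binZ; lia);
      rewrite e; clear e
    end
  end.

Lemma A_closed m h : (N m.+1 h false)%:Z = binZ m (h%:Z - 1).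
Proof.
elim: m h => [|m IH] h.
  rewrite N_rec /=.
  case: h => [|[|h]] /=; rewrite ?N0 /=.
  - by rewrite binZ_out //; left.
  - by rewrite subrr.
  - rewrite binZ_out //; right; lia.
rewrite N_rec /=; case: h => [|h] /=.
  by rewrite binZ_out //; left.
rewrite !addn0 PoszD !IH binZ_S; norm_binZ; lia.
Qed.

Ltac zero_binZ := repeat match goal with
  | |- context[binZ ?a ?c] => rewrite (@binZ_out a c); [|lia] end.

Definition G m h : int := binZ (2 * m)%N (m%:Z - h%:Z) - binZ (2 * m)%N (m%:Z - h%:Z - 1)
   + binZ m.-1 (h%:Z - 2) - binZ m (h%:Z - 1).

Lemma B_closed m h : (0 < m)%N -> (N m.+1 h true)%:Z = G m h.
Proof.
elim: m h => [|m IH] h // _.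
case: m IH => [|m] IH.
  rewrite N_rec /G.
  case: h => [|[|[|h]]] /=; rewrite ?N_rec ?N0 /=.
  all: try by [].
rewrite N_rec; case: h => [|h] /=.
  rewrite !add0n !addn0 !PoszD !IH // A_closed /G.
  have -> : (2 * m.+2 = (2 * m.+1).+2)%N by lia.
  rewrite ![binZ (2 * m.+1).+2 _]binZ_S2 ![binZ m.+2 _]binZ_S ![binZ m.+1 _]binZ_S /=.
  zero_binZ; norm_binZ.
  rewrite (binZ_sym _ (Posz m.+2 - Posz 0)); norm_binZ; lia.
rewrite ?addn0 !PoszD !IH // !A_closed /G.
have -> : (2 * m.+2 = (2 * m.+1).+2)%N by lia.
rewrite ![binZ (2 * m.+1).+2 _]binZ_S2 ![binZ m.+2 _]binZ_S ![binZ m.+1 _]binZ_S /=.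
zero_binZ; norm_binZ; lia.
Qed.

End BinZL.
Import BinZL.

Notation cel := (bool * nat)%type.
Definition x0 : cel := (false, 0).

Definition stp (new : bool) (u : cel) : step :=
  if u.1 then (if new then D else Hd) else (if new then U else Hu).

Definition enc (w : seq cel) : seq step :=
  [seq stp (nth x0 w x \notin take x w) (nth x0 w x) | x <- iota 0 (size w)].

Definition cOf (s : step) (p q : nat) : cel :=
  match s with U => (false, p) | Hu => (false, p.-1) | D => (true, q) | Hd => (true, q.-1) end.

Definition dec (t : seq step) : seq cel :=
  [seq cOf (nth U t x) (count_mem U (take x t)) (count_mem D (take x t)) | x <- iota 0 (size t)].

Lemma size_enc w : size (enc w) = size w.
Proof. by rewrite size_map size_iota. Qed.
Lemma size_dec t : size (dec t) = size t.
Proof. by rewrite size_map size_iota. Qed.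

Lemma enc_rcons w u : enc (rcons w u) = rcons (enc w) (stp (u \notin w) u).
Proof.
rewrite /enc size_rcons -addn1 iotaD map_cat /= cats1 add0n.
congr rcons; last by rewrite nth_rcons ltnn eqxx -cats1 take_size_cat.
apply/eq_in_map => x; rewrite mem_iota add0n => /= xlt.
by rewrite nth_rcons xlt -cats1 takel_cat // ltnW.
Qed.

Lemma dec_rcons t s : dec (rcons t s) = rcons (dec t) (cOf s (count_mem U t) (count_mem D t)).
Proof.
rewrite /dec size_rcons -addn1 iotaD map_cat /= cats1 add0n.
congr rcons; last by rewrite nth_rcons ltnn eqxx -cats1 take_size_cat.
apply/eq_in_map => x; rewrite mem_iota add0n => /= xlt.
by rewrite nth_rcons xlt -cats1 takel_cat // ltnW.
Qed.

Definition NW (u v : cel) := (u.1 ==> v.1) && (u.2 <= v.2).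

Definition ordered (w : seq cel) := forall x y, x < size w -> y < size w ->
  nth x0 w x != nth x0 w y -> NW (nth x0 w x) (nth x0 w y) -> x < y.

Lemma ordered_rcons w u : ordered (rcons w u) <->
  ordered w /\ (forall v, v \in w -> v != u -> ~~ NW u v).
Proof.
split.
  move=> o; split.
    move=> x y xl yl; have := o x y; rewrite size_rcons !nth_rcons xl yl.
    by move=> h; apply: h; apply: ltnW.
  move=> v vin vu; apply/negP => nw.
  have il : index v w < size w by rewrite index_mem.
  have uv : u != v by rewrite eq_sym.
  have := o (size w) (index v w).
  rewrite size_rcons ltnS leqnn ltnS (ltnW il) !nth_rcons ltnn eqxx il nth_index //.
  move=> /(_ isT isT uv nw) lt.
  by have := leq_ltn_trans (ltnW lt) il; rewrite ltnn.
move=> [o h] x y; rewrite size_rcons !ltnS.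
rewrite leq_eqVlt => /orP[/eqP ->|xl]; rewrite leq_eqVlt => /orP[/eqP ->|yl].
- by rewrite eqxx.
- rewrite !nth_rcons ltnn eqxx yl => ne nw.
  have vin := mem_nth x0 yl.
  have vu : nth x0 w y != u by rewrite eq_sym.
  by move: (h _ vin vu); rewrite nw.
- by move=> *; apply: (leq_trans xl).
- rewrite !nth_rcons xl yl; exact: o.
Qed.

Lemma eq_UD : (U == D) = false. Proof. by apply/eqP. Qed.
Lemma eq_UHu : (U == Hu) = false. Proof. by apply/eqP. Qed.
Lemma eq_UHd : (U == Hd) = false. Proof. by apply/eqP. Qed.
Lemma eq_DU : (D == U) = false. Proof. by apply/eqP. Qed.
Lemma eq_DHu : (D == Hu) = false. Proof. by apply/eqP. Qed.
Lemma eq_DHd : (D == Hd) = false. Proof. by apply/eqP. Qed.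
Lemma eq_HuU : (Hu == U) = false. Proof. by apply/eqP. Qed.
Lemma eq_HuD : (Hu == D) = false. Proof. by apply/eqP. Qed.
Lemma eq_HuHd : (Hu == Hd) = false. Proof. by apply/eqP. Qed.
Lemma eq_HdU : (Hd == U) = false. Proof. by apply/eqP. Qed.
Lemma eq_HdD : (Hd == D) = false. Proof. by apply/eqP. Qed.
Lemma eq_HdHu : (Hd == Hu) = false. Proof. by apply/eqP. Qed.
Definition step_neq := (eq_UD, eq_UHu, eq_UHd, eq_DU, eq_DHu, eq_DHd, eq_HuU, eq_HuD, eq_HuHd, eq_HdU, eq_HdD, eq_HdHu).

Lemma count_rcons_mem (s : seq step) x y : count_mem y (rcons s x) = count_mem y s + (x == y).
Proof. by rewrite -cats1 count_cat /= addn0 eq_sym. Qed.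

Lemma mem_rcons_cel (w : seq cel) u v : (v \in rcons w u) = (v == u) || (v \in w).
Proof. by rewrite mem_rcons in_cons. Qed.

Lemma pair_eq (r r' : bool) (j j' : nat) : ((r, j) == (r', j')) = (r == r') && (j == j').
Proof. by []. Qed.

Lemma dec_inv t h sn : walk2 (0,false) t = Some (h, sn) ->
  [/\ enc (dec t) = t, ordered (dec t), count_mem D t <= count_mem U t,
      h = count_mem U t - count_mem D t & sn = (0 < count_mem D t)] /\
      (forall u, (u \in dec t) = (if u.1 then u.2 < count_mem D t else u.2 < count_mem U t)).
Proof.
elim/last_ind: t h sn => [|t s IH] h sn.
  case=> <- <-; split; first split => //; try by move=> x y; rewrite size_dec.
  by move=> [[] j]; rewrite /dec /= in_nil ltn0.
rewrite walk2_rcons; case E: (walk2 _ t) => [[h0 sn0]|] //= Hs.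
have [[Henc Hord Hqp Hh Hsn] Hmem] := IH _ _ E.
rewrite dec_rcons enc_rcons !count_rcons_mem Henc.
set p := count_mem U t in Hqp Hh Hsn Hmem *.
set q := count_mem D t in Hqp Hh Hsn Hmem *.
clear IH E Henc.
case: s Hs => /=; rewrite ?step_neq ?eqxx ?addn0 ?addn1.
- case=> <- <-.
  have nin : (false, p) \notin dec t by rewrite Hmem /= ltnn.
  rewrite nin /=; split; first split => //; try lia.
  + apply/ordered_rcons; split => // -[vr vj]; rewrite Hmem pair_eq /NW /=.
    by case: vr => /=; lia.
  + by move=> [[] j]; rewrite mem_rcons_cel pair_eq Hmem /=; lia.
- case: h0 Hh => [|h1] Hh //= [<- <-].
  have nin : (true, q) \notin dec t by rewrite Hmem /= ltnn.
  rewrite nin /=; split; first split => //; try lia.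
  + apply/ordered_rcons; split => // -[vr vj]; rewrite Hmem pair_eq /NW /=.
    by case: vr => /=; lia.
  + by move=> [[] j]; rewrite mem_rcons_cel pair_eq Hmem /=; lia.
- case: eqP => // h0n [<- <-].
  have iin : (false, p.-1) \in dec t by rewrite Hmem /=; lia.
  rewrite iin /=; split; first split => //; try lia.
  + apply/ordered_rcons; split => // -[vr vj]; rewrite Hmem pair_eq /NW /=.
    by case: vr => /=; lia.
  + by move=> [[] j]; rewrite mem_rcons_cel pair_eq Hmem /=; lia.
- case: sn0 Hsn => // Hsn [<- <-].
  have iin : (true, q.-1) \in dec t by rewrite Hmem /=; lia.
  rewrite iin /=; split; first split => //; try lia.
  + apply/ordered_rcons; split => // -[vr vj]; rewrite Hmem pair_eq /NW /=.
    by case: vr => /=; lia.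
  + by move=> [[] j]; rewrite mem_rcons_cel pair_eq Hmem /=; lia.
Qed.

Definition downclosed (w : seq cel) := forall u v, u \in w -> NW v u -> v \in w.

Lemma good_rcons w u : ordered (rcons w u) -> downclosed (rcons w u) ->
  ordered w /\ downclosed w.
Proof.
move=> /ordered_rcons [o h] d; split => // x v xin nw.
have : v \in rcons w u by apply: (d x); rewrite // mem_rcons_cel xin orbT.
rewrite mem_rcons_cel => /orP [/eqP e|//]; subst v.
case: (eqVneq x u) => [<- //|xu].
by move: (h x xin xu); rewrite nw.
Qed.

Lemma enc_inv w : ordered w -> downclosed w ->
  [/\ dec (enc w) = w, count_mem D (enc w) <= count_mem U (enc w) &
      walk2 (0,false) (enc w) = Some (count_mem U (enc w) - count_mem D (enc w), 0 < count_mem D (enc w))] /\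
  (forall u, (u \in w) = (if u.1 then u.2 < count_mem D (enc w) else u.2 < count_mem U (enc w))).
Proof.
elim/last_ind: w => [|w [r j] IH] o d.
  split; first by split.
  by move=> [[] k]; rewrite in_nil /= ltn0.
have [o' d'] := good_rcons o d.
have [[Hdec Hqp Hwalk] Hmem] := IH o' d'.
move/ordered_rcons: o => [_ Hno].
rewrite enc_rcons dec_rcons walk2_rcons !count_rcons_mem Hdec Hwalk.
set p := count_mem U (enc w) in Hqp Hmem *.
set q := count_mem D (enc w) in Hqp Hmem *.
clear IH Hwalk Hdec o'.
have Hd : forall v, NW v (r, j) -> v \in rcons w (r, j).
  by move=> v nw; apply: (d (r, j)); rewrite // mem_rcons_cel eqxx.
clear d d'.
case: (boolP ((r, j) \in w)) => uin; rewrite /stp /=.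
- case: r Hd Hno uin => Hd Hno uin /=; rewrite ?step_neq ?eqxx ?addn0 ?addn1.
  + have jq : j < q by move: uin; rewrite Hmem.
    have f1 := Hno (true, q.-1); rewrite Hmem pair_eq /NW /= in f1.
    have e : j = q.-1 by move: f1; lia.
    subst j; have q0 : 0 < q by lia.
    rewrite q0; split; first by split.
    by move=> [[] k]; rewrite mem_rcons_cel pair_eq Hmem /=; lia.
  + have jp : j < p by move: uin; rewrite Hmem.
    have f1 := Hno (false, p.-1); rewrite Hmem pair_eq /NW /= in f1.
    have e : j = p.-1 by move: f1; lia.
    have f2 := Hno (true, p.-1); rewrite Hmem pair_eq /NW /= in f2.
    have qp : q < p by move: f2; lia.
    subst j; have -> : (p - q == 0) = false by lia.
    split; first by split.
    by move=> [[] k]; rewrite mem_rcons_cel pair_eq Hmem /=; lia.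
- case: r Hd Hno uin => Hd Hno uin /=; rewrite ?step_neq ?eqxx ?addn0 ?addn1.
  + have jq : q <= j by move: uin; rewrite Hmem /=; lia.
    have f1 := Hd (true, q); rewrite /NW /= mem_rcons_cel pair_eq Hmem /= in f1.
    have e : j = q by move: f1; lia.
    have f2 := Hd (false, q); rewrite /NW /= mem_rcons_cel pair_eq Hmem /= in f2.
    have qp : q < p by move: f2; lia.
    subst j; have -> : p - q = (p - q.+1).+1 by lia.
    split; first by split.
    by move=> [[] k]; rewrite mem_rcons_cel pair_eq Hmem /=; lia.
  + have jp : p <= j by move: uin; rewrite Hmem /=; lia.
    have f1 := Hd (false, p); rewrite /NW /= mem_rcons_cel pair_eq Hmem /= in f1.
    have e : j = p by move: f1; lia.
    subst j.
    split; first by split; [|lia|rewrite subSn].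
    by move=> [[] k]; rewrite mem_rcons_cel pair_eq Hmem /=; lia.
Qed.

Definition cc (lam : seq nat) (u : cell lam) : cel := (val u.1 != 0, val u.2).
Definition inshp (b c : nat) (u : cel) := if u.1 then u.2 < c else u.2 < b.

Lemma tr_head b i : head 0 (two_row b i) = b.
Proof. by rewrite /two_row; case: (_ == _). Qed.
Lemma tr_nth0 b i : nth 0 (two_row b i) 0 = b.
Proof. by rewrite /two_row; case: (_ == _). Qed.
Lemma tr_nth1 b i : nth 0 (two_row b i) 1 = b - i.
Proof. by rewrite /two_row; case: eqP. Qed.
Lemma tr_size b i : size (two_row b i) <= 2.
Proof. by rewrite /two_row; case: (_ == _). Qed.
Lemma tr_size2 b i : 0 < b - i -> size (two_row b i) = 2.
Proof. by rewrite /two_row; case: eqP => // ->. Qed.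
Lemma tr_sumn b i : sumn (two_row b i) = b + (b - i).
Proof. by rewrite /two_row; case: eqP => [->|] /=; rewrite ?addn0. Qed.

Lemma in_shapeE b i (u : cell (two_row b i)) : in_shape u = inshp b (b - i) (cc u).
Proof.
rewrite /in_shape /cc /inshp.
have := tr_size b i; case: u => [[r hr] [j hj]] /= s2.
case: r hr => [|[|r]] hr /=; first by rewrite tr_nth0.
  by rewrite tr_nth1.
by exfalso; lia.
Qed.

Lemma cc_inj b i : injective (@cc (two_row b i)).
Proof.
move=> [[r1 h1] [j1 k1]] [[r2 h2] [j2 k2]]; rewrite /cc /= => [[e1 e2]].
have s2 := tr_size b i.
subst j2; have er : r1 = r2 by case: r1 r2 h1 h2 e1 => [|[|?]] [|[|?]] //= *; lia.
subst r2; congr pair; apply: val_inj => //.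
Qed.

Lemma cc_surj b i v : i <= b -> inshp b (b - i) v -> exists u : cell (two_row b i), cc u = v.
Proof.
move=> ib; case: v => [[] j]; rewrite /inshp /= => hj.
  have hr : 1 < size (two_row b i) by rewrite tr_size2 //; lia.
  have hj' : j < head 0 (two_row b i) by rewrite tr_head; lia.
  by exists (Ordinal hr, Ordinal hj').
have hr : 0 < size (two_row b i) by rewrite /two_row; case: (_ == _).
have hj' : j < head 0 (two_row b i) by rewrite tr_head; lia.
by exists (Ordinal hr, Ordinal hj').
Qed.

Lemma weakly_nwE b i (u v : cell (two_row b i)) : weakly_nw u v = NW (cc u) (cc v).
Proof.
rewrite /weakly_nw /NW /cc.
have := tr_size b i; case: u v => [[r1 h1] [j1 k1]] [[r2 h2] [j2 k2]] /= s2.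
by case: r1 r2 h1 h2 => [|[|?]] [|[|?]] //= *; lia.
Qed.

Lemma SYT_E lam k (f : {ffun cell lam -> {set 'I_(sumn lam + k)}}) :
  f \in SYTplus lam k <->
  [/\ (forall u, ~~ in_shape u -> f u = set0),
      (forall u, in_shape u -> f u != set0),
      (forall u v, in_shape u -> in_shape v -> u != v -> [disjoint f u & f v]),
      (forall x, exists u, in_shape u && (x \in f u)) &
      (forall u v, in_shape u -> in_shape v -> u != v -> weakly_nw u v ->
         forall x y, x \in f u -> y \in f v -> (x < y)%N)].
Proof.
rewrite inE; split.
  move=> /andP[/andP[/andP[/andP[H1 H2] H3] H4] H5]; split.
  - by move=> u nu; move/forallP: H1 => /(_ u); rewrite (negbTE nu) /= => /eqP.
  - by move=> u su; move/forallP: H2 => /(_ u); rewrite su.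
  - by move=> u v su sv uv; move/forallP: H3 => /(_ u) /forallP /(_ v); rewrite su sv uv.
  - by move=> x; move/forallP: H4 => /(_ x) /existsP.
  - move=> u v su sv uv nw x y xu yv.
    move/forallP: H5 => /(_ u) /forallP /(_ v); rewrite su sv uv nw /=.
    by move=> /forallP /(_ x) /forallP /(_ y); rewrite xu yv.
move=> [H1 H2 H3 H4 H5].
apply/andP; split; first (apply/andP; split; first (apply/andP; split; first (apply/andP; split))).
- by apply/forallP => u; apply/implyP => nu; rewrite H1.
- by apply/forallP => u; apply/implyP => su; rewrite H2.
- apply/forallP => u; apply/forallP => v; apply/implyP => /andP[/andP[su sv] uv].
  exact: H3.
- by apply/forallP => x; apply/existsP; apply: H4.
- apply/forallP => u; apply/forallP => v; apply/implyP => /andP[/andP[/andP[su sv] uv] nw].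
  apply/forallP => x; apply/forallP => y; apply/implyP => /andP[xu yv].
  exact: (H5 u v).
Qed.

Definition cellOf lam M (f : {ffun cell lam -> {set 'I_M}}) (x : 'I_M) : cel :=
  if [pick u | in_shape u && (x \in f u)] is Some u then cc u else x0.
Definition wf lam M (f : {ffun cell lam -> {set 'I_M}}) : seq cel :=
  [seq cellOf f x | x <- enum 'I_M].
Definition Psi lam M (w : seq cel) : {ffun cell lam -> {set 'I_M}} :=
  [ffun u => [set x : 'I_M | in_shape u && (nth x0 w x == cc u)]].

Arguments Psi {lam M} w.

Lemma size_wf lam M f : size (@wf lam M f) = M.
Proof. by rewrite size_map size_enum_ord. Qed.

Lemma nth_wf lam M f (x : 'I_M) : nth x0 (@wf lam M f) x = cellOf f x.
Proof. by rewrite /wf (nth_map x) ?size_enum_ord // nth_ord_enum. Qed.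

Definition valid b c (w : seq cel) :=
  [/\ ordered w, (forall u, u \in w -> inshp b c u) & (forall u, inshp b c u -> u \in w)].

Lemma cellOf_spec b i k (f : {ffun cell (two_row b i) -> {set 'I_(sumn (two_row b i) + k)}}) :
  f \in SYTplus (two_row b i) k -> forall x u, in_shape u -> x \in f u -> cellOf f x = cc u.
Proof.
move/SYT_E => [H1 H2 H3 H4 H5] x u su xu; rewrite /cellOf.
case: pickP => [u' /andP[su' xu'] | none]; last by move: (none u); rewrite su xu.
case: (eqVneq u' u) => [-> //|ne].
by move: (disjointFr (H3 _ _ su' su ne) xu'); rewrite xu.
Qed.

Lemma cellOf_ex b i k (f : {ffun cell (two_row b i) -> {set 'I_(sumn (two_row b i) + k)}}) :
  f \in SYTplus (two_row b i) k -> forall x, exists u, [/\ in_shape u, x \in f u & cellOf f x = cc u].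
Proof.
move=> Hf x; move: (Hf) => /SYT_E [_ _ _ H4 _].
have [u /andP[su xu]] := H4 x.
by exists u; split => //; exact: (cellOf_spec Hf su xu).
Qed.

Lemma SYT_valid b i k f : i <= b -> f \in SYTplus (two_row b i) k -> valid b (b - i) (wf f).
Proof.
move=> ib Hf; move: (Hf) => /SYT_E [H1 H2 H3 H4 H5]; split.
- move=> x y; rewrite size_wf => xl yl.
  have := nth_wf f (Ordinal xl); have := nth_wf f (Ordinal yl); rewrite /= => -> ->.
  have [u [su xu ->]] := cellOf_ex Hf (Ordinal xl).
  have [v [sv yv ->]] := cellOf_ex Hf (Ordinal yl).
  move=> ne nw.
  have uv : u != v by apply: contraNneq ne => ->.
  by apply: (H5 u v su sv uv _ _ _ xu yv); rewrite weakly_nwE.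
- move=> u /mapP [x _ ->].
  have [v [sv _ ->]] := cellOf_ex Hf x.
  by rewrite -in_shapeE.
- move=> v iv; have [u cu] := cc_surj ib iv.
  have su : in_shape u by rewrite in_shapeE cu.
  have /set0Pn [x xu] := H2 u su.
  by apply/mapP; exists x; [rewrite mem_enum | rewrite (cellOf_spec Hf su xu)].
Qed.

Lemma Psi_wf b i k f : f \in SYTplus (two_row b i) k -> Psi (wf f) = f.
Proof.
move=> Hf; move: (Hf) => /SYT_E [H1 H2 H3 H4 H5].
apply/ffunP => u; rewrite ffunE; apply/setP => x; rewrite inE nth_wf.
case: (boolP (in_shape u)) => su /=; last by rewrite H1 // inE.
apply/eqP/idP => [e | xu]; last exact: (cellOf_spec Hf su xu).
have [v [sv xv cv]] := cellOf_ex Hf x.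
by move: e; rewrite cv => /cc_inj <-.
Qed.

Lemma Psi_SYT b i k (w : seq cel) : i <= b -> valid b (b - i) w -> size w = sumn (two_row b i) + k ->
  (Psi w : {ffun cell (two_row b i) -> {set 'I_(sumn (two_row b i) + k)}}) \in SYTplus (two_row b i) k.
Proof.
move=> ib [o Hin Hhit] sw; apply/SYT_E; split.
- by move=> u nu; apply/setP => x; rewrite ffunE !inE (negbTE nu).
- move=> u su; apply/set0Pn.
  have cw : cc u \in w by apply: Hhit; rewrite -in_shapeE.
  have xl : index (cc u) w < sumn (two_row b i) + k by rewrite -sw index_mem.
  by exists (Ordinal xl); rewrite ffunE inE su /= nth_index.
- move=> u v su sv uv; rewrite -setI_eq0; apply/eqP/setP => x; rewrite !ffunE !inE su sv /=.
  apply/negP => /andP [/eqP e1 /eqP e2]; rewrite e1 in e2.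
  by move/cc_inj: e2 => e; rewrite e eqxx in uv.
- move=> x; have xl : x < size w by rewrite sw.
  have [u cu] := cc_surj ib (Hin _ (mem_nth x0 xl)).
  by exists u; rewrite ffunE inE in_shapeE cu (Hin _ (mem_nth x0 xl)) eqxx.
- move=> u v su sv uv nw x y; rewrite !ffunE !inE su sv /= => /eqP ex /eqP ey.
  have xl : x < size w by rewrite sw.
  have yl : y < size w by rewrite sw.
  apply: o => //; rewrite ex ey; last by rewrite -weakly_nwE.
  by apply: contraNneq uv => /cc_inj ->.
Qed.

Lemma wf_Psi b i k (w : seq cel) : i <= b -> valid b (b - i) w -> size w = sumn (two_row b i) + k ->
  wf (Psi w : {ffun cell (two_row b i) -> {set 'I_(sumn (two_row b i) + k)}}) = w.
Proof.
move=> ib vw sw; have Hf := Psi_SYT ib vw sw.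
apply: (@eq_from_nth _ x0); first by rewrite size_wf.
move=> x; rewrite size_wf => xl.
have := nth_wf (Psi w : {ffun cell (two_row b i) -> {set 'I_(sumn (two_row b i) + k)}}) (Ordinal xl).
rewrite /= => ->.
have [u [su xu ->]] := cellOf_ex Hf (Ordinal xl).
by move: xu; rewrite ffunE inE su /= => /eqP.
Qed.

Lemma valid_enc b i w : i <= b -> valid b (b - i) w ->
  [/\ dec (enc w) = w, count_mem U (enc w) = b & walk 0 false (enc w) = Some i].
Proof.
move=> ib [o Hin Hhit].
have dc : downclosed w.
  move=> [ur uj] [vr vj] uw nw; apply: Hhit; move: (Hin _ uw) nw.
  rewrite /inshp /NW /=.
  by case: (ur) (vr) => [] [] /=; lia.
have [[Hdec Hqp Hwalk] Hmem] := enc_inv o dc.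
set p := count_mem U (enc w) in Hqp Hwalk Hmem *.
set q := count_mem D (enc w) in Hqp Hwalk Hmem *.
have eq : forall u, inshp b (b - i) u = (if u.1 then u.2 < q else u.2 < p).
  move=> u; rewrite -Hmem; apply/idP/idP; [exact: Hhit | exact: Hin].
have pb : p = b.
  have := eq (false, p); have := eq (false, b); rewrite /inshp /= ltnn; lia.
have qc : q = b - i.
  have := eq (true, q); have := eq (true, b - i); rewrite /inshp /= ltnn; lia.
split => //; rewrite walkE Hwalk /= pb qc; congr Some; lia.
Qed.

Lemma dec_valid b i t : i <= b -> walk 0 false t = Some i -> count_mem U t = b ->
  valid b (b - i) (dec t) /\ enc (dec t) = t.
Proof.
move=> ib; rewrite walkE; case E: (walk2 _ t) => [[h sn]|] //= [eh] cU.
have [[Henc Hord Hqp Hh Hsn] Hmem] := dec_inv E.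
subst h; rewrite cU in Hqp Hh Hmem.
have qc : count_mem D t = b - i by lia.
rewrite qc in Hmem; split => //; split => // u.
- by rewrite Hmem /inshp.
- by rewrite Hmem /inshp.
Qed.

Lemma Phi_size lam M (f : {ffun cell lam -> {set 'I_M}}) : size (enc (wf f)) == M.
Proof. by rewrite size_enc size_wf. Qed.

Definition Phi lam M (f : {ffun cell lam -> {set 'I_M}}) : M.-tuple step := Tuple (Phi_size f).

Lemma card_SYT b i k : i <= b ->
  #|SYTplus (two_row b i) k| =
  #|[set t : (sumn (two_row b i) + k).-tuple step | (walk 0 false t == Some i) && (count_mem U t == b)]|.
Proof.
move=> ib.
rewrite -(@card_in_imset _ _ (@Phi (two_row b i) (sumn (two_row b i) + k))).
  apply: eq_card => t; rewrite inE.
  apply/imsetP/andP => [[f Hf ->] | [/eqP wt /eqP ct]].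
    have [_ -> ->] := valid_enc ib (SYT_valid ib Hf).
    by split.
  have [vd ed] := dec_valid ib wt ct.
  have sd : size (dec t) = sumn (two_row b i) + k by rewrite size_dec size_tuple.
  exists (Psi (dec t) : {ffun cell (two_row b i) -> {set 'I_(sumn (two_row b i) + k)}}).
    exact: Psi_SYT ib vd sd.
  by apply: val_inj; rewrite /= (wf_Psi ib vd sd) ed.
move=> f g Hf Hg e.
have : wf f = wf g.
  have [d1 _ _] := valid_enc ib (SYT_valid ib Hf).
  have [d2 _ _] := valid_enc ib (SYT_valid ib Hg).
  by rewrite -d1 -d2; move/(congr1 val): e => /= ->.
by move=> e2; rewrite -(Psi_wf Hf) -(Psi_wf Hg) e2.
Qed.

Lemma Bal_split n i : #|Bal n i| = N n i false + N n i true.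
Proof.
rewrite /Bal /N -cnt_or; last first.
  move=> w; case: (walk2 _ w) => [[h sn]|] //=; rewrite !oeq.
  by case: sn; rewrite ?andbF.
rewrite /cnt; apply: eq_card => t; rewrite !inE walkE.
case: (walk2 _ t) => [[h sn]|] //=; rewrite !oeq.
by case: sn; rewrite /= ?andbT ?andbF ?orbF.
Qed.

Lemma card_len (M N : nat) (Q : seq step -> bool) : M = N ->
  #|[set t : M.-tuple step | Q t]| = #|[set t : N.-tuple step | Q t]|.
Proof. by move=> ->. Qed.

Lemma count_UD (s : seq step) : count_mem U s + count_mem D s <= size s.
Proof.
rewrite -count_predUI.
have -> : count (predI (pred1 U) (pred1 D)) s = 0.
  by apply/eqP; rewrite -leqn0 leqNgt -has_count; apply/hasP => -[x _ /andP[/eqP -> /eqP]].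
by rewrite addn0 count_size.
Qed.

Lemma walk_range n i (t : n.-tuple step) : 2 <= n -> walk 0 false t = Some i ->
  (maxn i 1 <= count_mem U t) && (2 * count_mem U t - i <= n).
Proof.
move=> n2; rewrite walkE; case E: (walk2 _ _) => [[h sn]|] //= [eh].
have [[Henc Hord Hqp Hh Hsn] Hmem] := dec_inv E.
have s1 : count_mem U t + count_mem D t <= n.
  by rewrite -{3}(size_tuple t) count_UD.
have p0 : 0 < count_mem U t.
  have sd : 0 < size (dec t) by rewrite size_dec size_tuple; lia.
  have := Hmem (nth x0 (dec t) 0); rewrite mem_nth //.
  case: (nth x0 (dec t) 0) => [[] j] /= /esym hj; [exact: leq_trans (leq_ltn_trans (leq0n j) hj) Hqp | exact: leq_ltn_trans (leq0n j) hj].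
clear Hmem Henc Hord Hsn E; set p := count_mem U t in Hqp Hh s1 p0 *; set q := count_mem D t in Hqp Hh s1 *. apply/andP; split; lia.
Qed.

Lemma sum_Bal n i : 2 <= n ->
  (\sum_(b < n.+1 | (maxn i 1 <= b)%N && (2 * b - i <= n)%N)
       #|SYTplus (two_row b i) (n - (2 * b - i))|)%N = #|Bal n i|.
Proof.
move=> n2.
have step1 : forall b : 'I_n.+1, (maxn i 1 <= b)%N && (2 * b - i <= n)%N ->
   #|SYTplus (two_row b i) (n - (2 * b - i))| =
   cnt n (fun s => (walk 0 false s == Some i) && (count_mem U s == b)).
  move=> b /andP [h1 h2]; rewrite card_SYT; last by lia.
  apply: (@card_len _ _ (fun s : seq step => (walk 0 false s == Some i) && (count_mem U s == b))); rewrite tr_sumn; lia.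
rewrite (eq_bigr _ step1).
rewrite big_mkcond /=.
rewrite (eq_bigr (fun b : 'I_n.+1 => cnt n (fun s => (walk 0 false s == Some i) && (count_mem U s == b)))); last first.
  move=> b _; case: ifP => // nP; apply/esym; rewrite cnt_sum big1 // => t _.
  case: (boolP ((walk 0 false t == Some i) && (count_mem U t == b))) => //= /andP [/eqP w /eqP c].
  by have := walk_range n2 w; rewrite c nP.
have -> : #|Bal n i| = cnt n (fun s => walk 0 false s == Some i) by [].
rewrite cnt_sum.
rewrite (eq_bigr (fun b : 'I_n.+1 => \sum_(t : n.-tuple step) ((walk 0 false t == Some i) && (count_mem U t == b) : nat))); last by move=> b _; rewrite cnt_sum.
rewrite exchange_big /=; apply: eq_bigr => t _.
have cl : count_mem U t < n.+1 by rewrite ltnS -{2}(size_tuple t) count_size.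
rewrite (bigD1 (Ordinal cl)) //= eqxx andbT big1 ?addn0 // => j nj.
case: (walk _ _ t == _) => //=; case: eqP => // e; case/negP: nj; apply/eqP/val_inj => /=.
by rewrite e.
Qed.

Unset Implicit Arguments.
Local Open Scope int_scope.

Theorem theorem13 (n i : nat) (hn : (2 <= n)%N) (hi : (i <= n)%N) :
  let rhs : int :=
    (binZ (2 * n - 2) (n%:Z - i%:Z - 1) - binZ (2 * n - 2) (n%:Z - i%:Z - 2)
     + binZ (n - 2) (n%:Z - i%:Z))%R in
  (#|Bal n i|%:Z = rhs)
  /\
  ((\sum_(b < n.+1 | (maxn i 1 <= b)%N && (2 * b - i <= n)%N)
       #|SYTplus (two_row b i) (n - (2 * b - i))|)%N%:Z = rhs).
Proof.
move=> rhs.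
have H1 : #|Bal n i|%:Z = rhs.
  rewrite /rhs Bal_split PoszD.
  case: n hn hi {rhs} => [|[|m]] // hn hi.
  rewrite A_closed B_closed // /G.
  rewrite (binZ_sym (m.+2 - 2)%N).
  norm_binZ; lia.
split => //.
by rewrite sum_Bal.
Qed.
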